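(* For a metric space $(X,d)$ the following are equivalent: (1) $(X,d)$ is locally compact. (2) $\mathsf{K}(X)$ is a continuous semilattice, and $\xi^\sigma:(X,d)\to\Sigma\,\mathsf{K}((X,d))$, $x\mapsto\{x\}$, is continuous. (3) $\mathsf{K}((X,d))$ is a continuous semilattice, and $(X,d)$ has property Q. (4) $\mathsf{K}((X,d))$ is a continuous semilattice. (5) $(X,d)$ is core compact.
   Context: For a metric space, $\mathsf{K}(X)$ is the set of nonempty compact subsets ordered by reverse inclusion (suprema, when they exist, are intersections). Scott topology on a poset: upper sets $U$ such that every directed $D$ with existing supremum in $U$ meets $U$; $\Sigma Q$ is $Q$ with it. $a\ll b$ means for every directed $D$ with existing $\bigvee D\ge b$ some $d\in D$ has $d\ge a$; $\mathsf{K}(X)$ is a continuous semilattice if it is directed complete and each $K$ is the directed supremum of $\{L:L\ll K\}$. Property Q: for all $K_1,K_2\in\mathsf{K}(X)$, $K_1\ll K_2$ iff $K_2\subseteq\operatorname{int}K_1$. Core compact: the lattice of open sets is a continuous lattice. *)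

(* Defs.v *)
From Stdlib Require Import Reals List.
Open Scope R_scope.
Set Implicit Arguments.

Section Order.
Variable T : Type.
Variable le : T -> T -> Prop.

Definition directed (D : T -> Prop) : Prop :=
  (exists a, D a) /\
  (forall a b, D a -> D b -> exists c, D c /\ le a c /\ le b c).

Definition is_sup (D : T -> Prop) (s : T) : Prop :=
  (forall a, D a -> le a s) /\ (forall u, (forall a, D a -> le a u) -> le s u).

Definition way_below (a b : T) : Prop :=
  forall (D : T -> Prop) (s : T), directed D -> is_sup D s -> le b s ->
    exists d, D d /\ le a d.

Definition directed_complete : Prop :=
  forall D, directed D -> exists s, is_sup D s.

Definition complete_lattice : Prop :=
  forall D : T -> Prop, exists s, is_sup D s.

Definition approximated : Prop :=
  forall x, directed (fun y => way_below y x) /\ is_sup (fun y => way_below y x) x.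

Definition continuous_semilattice : Prop := directed_complete /\ approximated.

Definition continuous_lattice : Prop := complete_lattice /\ approximated.

Definition scott_open (U : T -> Prop) : Prop :=
  (forall a b, U a -> le a b -> U b) /\
  (forall D s, directed D -> is_sup D s -> U s -> exists d, D d /\ U d).
End Order.

Section Metric.
Variable X : Type.
Variable d : X -> X -> R.

Definition is_metric : Prop :=
  (forall x y, 0 <= d x y) /\
  (forall x y, d x y = 0 <-> x = y) /\
  (forall x y, d x y = d y x) /\
  (forall x y z, d x z <= d x y + d y z).

Definition open (U : X -> Prop) : Prop :=
  forall x, U x -> exists r, 0 < r /\ forall y, d x y < r -> U y.

Definition interior (A : X -> Prop) (x : X) : Prop :=
  exists U, open U /\ U x /\ forall y, U y -> A y.

Definition compact (K : X -> Prop) : Prop :=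
  forall (I : Type) (U : I -> X -> Prop),
    (forall i, open (U i)) -> (forall x, K x -> exists i, U i x) ->
    exists l : list I, forall x, K x -> exists i, In i l /\ U i x.

Definition locally_compact : Prop :=
  forall x, exists K, compact K /\ interior K x.

(* K(X): nonempty compact subsets, ordered by reverse inclusion *)
Definition KX : Type := { K : X -> Prop | (exists x, K x) /\ compact K }.

Definition KX_le (K1 K2 : KX) : Prop :=
  forall x, proj1_sig K2 x -> proj1_sig K1 x.

Lemma singleton_nonempty_compact (x : X) :
  (exists y, x = y) /\ compact (fun y => x = y).
Proof.
  split; [exists x; reflexivity|].
  intros I U _ Hcov. destruct (Hcov x eq_refl) as [i Hi].
  exists (i :: nil). intros y <-. exists i. split; [left; reflexivity | exact Hi].
Qed.

Definition xi (x : X) : KX :=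
  exist _ (fun y => x = y) (singleton_nonempty_compact x).

Definition xi_sigma_continuous : Prop :=
  forall U : KX -> Prop, scott_open KX_le U -> open (fun x => U (xi x)).

Definition property_Q : Prop :=
  forall K1 K2 : KX,
    way_below KX_le K1 K2 <-> (forall x, proj1_sig K2 x -> interior (proj1_sig K1) x).

Definition OX : Type := { U : X -> Prop | open U }.

Definition OX_le (U V : OX) : Prop := forall x, proj1_sig U x -> proj1_sig V x.

Definition core_compact : Prop := continuous_lattice OX_le.
End Metric.

(* Main.v *)
Require Import Defs.
From Stdlib Require Import Reals List Lra Lia Arith Classical ClassicalEpsilon FunctionalExtensionality PropExtensionality.
Require Import Defs.
Open Scope R_scope.


Lemma d_facts {X} {d : X -> X -> R} (Hd : is_metric d) :
  (forall x y, 0 <= d x y) /\ (forall x, d x x = 0) /\ (forall x y, d x y = 0 -> x = y) /\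
  (forall x y, d x y = d y x) /\ (forall x y z, d x z <= d x y + d y z).
Proof.
  destruct Hd as (H1 & H2 & H3 & H4). repeat split; auto.
  - intro x; apply H2; auto.
  - intros x y; apply H2.
Qed.

Definition closed {X} (d : X -> X -> R) (A : X -> Prop) : Prop :=
  forall y, ~ A y -> exists r, 0 < r /\ forall z, d y z < r -> ~ A z.

Lemma ball_open {X} {d : X -> X -> R} (Hd : is_metric d) x r :
  open d (fun y => d x y < r).
Proof.
  destruct (d_facts Hd) as (P & Z & E & Sy & T).
  intros y Hy. exists (r - d x y). split; [lra|].
  intros z Hz. pose proof (T x y z). lra.
Qed.

Lemma open_ext {X} (d : X -> X -> R) (A B : X -> Prop) :
  (forall x, A x <-> B x) -> open d A -> open d B.
Proof.
  intros E HA x Hx. apply E in Hx. destruct (HA x Hx) as (r & Hr & H).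
  exists r; split; auto. intros; apply E; auto.
Qed.

Lemma compact_ext {X} (d : X -> X -> R) (A B : X -> Prop) :
  (forall x, A x <-> B x) -> compact d A -> compact d B.
Proof.
  intros E HA I U HU Hc. destruct (HA I U HU) as (l & Hl).
  - intros x Hx; apply Hc, E, Hx.
  - exists l; intros x Hx; apply Hl, E, Hx.
Qed.

Lemma interior_open {X} (d : X -> X -> R) A : open d (interior d A).
Proof.
  intros x (U & HU & Hx & HUA). destruct (HU x Hx) as (r & Hr & H).
  exists r; split; auto. intros y Hy. exists U; repeat split; auto.
Qed.

Lemma interior_sub {X} (d : X -> X -> R) (A : X -> Prop) x : interior d A x -> A x.
Proof. intros (U & _ & Hx & H); auto. Qed.

Lemma interior_mono {X} (d : X -> X -> R) (A B : X -> Prop) x :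
  (forall y, A y -> B y) -> interior d A x -> interior d B x.
Proof. intros H (U & HU & Hx & H'); exists U; repeat split; auto. Qed.

Lemma list_min {I} (f : I -> R) (l : list I) :
  exists r, 0 < r /\ forall i, In i l -> 0 < f i -> r <= f i.
Proof.
  induction l as [|a l IH].
  - exists 1; split; [lra| intros i []].
  - destruct IH as (r & Hr & H).
    destruct (Rlt_or_le 0 (f a)) as [Ha|Ha].
    + exists (Rmin r (f a)); split; [apply Rmin_pos; auto|].
      intros i [<-|Hi] Hf; [apply Rmin_r|]. eapply Rle_trans; [apply Rmin_l|auto].
    + exists r; split; auto. intros i [<-|Hi] Hf; [lra|auto].
Qed.

Lemma compact_closed {X} {d : X -> X -> R} (Hd : is_metric d) K :
  compact d K -> closed d K.
Proof.
  destruct (d_facts Hd) as (P & Z & E & Sy & T).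
  intros HK y Hy.
  destruct (HK X (fun i z => d i z < d i y / 2)) as (l & Hl).
  - intros i; apply ball_open; auto.
  - intros x Hx. exists x. rewrite Z.
    assert (d x y <> 0) by (intro H; apply E in H; subst; tauto).
    pose proof (P x y); lra.
  - destruct (list_min (fun i => d i y / 2) l) as (r & Hr & Hm).
    exists r; split; auto. intros z Hz Kz.
    destruct (Hl z Kz) as (i & Hi & Hiz).
    pose proof (P i z). assert (0 < d i y / 2) by lra.
    specialize (Hm i Hi H0). pose proof (T i z y). rewrite (Sy z y) in H1. lra.
Qed.

Lemma closed_sub_compact {X} (d : X -> X -> R) (A K : X -> Prop) :
  closed d A -> (forall x, A x -> K x) -> compact d K -> compact d A.
Proof.
  intros HA HAK HK I U HU Hc.
  destruct (HK (option I) (fun o z => match o with Some i => U i z | None => ~ A z end)) as (l & Hl).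
  - intros [i|]; [apply HU|]. intros y Hy. destruct (HA y Hy) as (r & Hr & H). exists r; auto.
  - intros x Hx. destruct (classic (A x)) as [Ax|Ax].
    + destruct (Hc x Ax) as (i & Hi). exists (Some i); auto.
    + exists None; auto.
  - exists (flat_map (fun o => match o with Some i => i :: nil | None => nil end) l).
    intros x Ax. destruct (Hl x (HAK x Ax)) as ([i|] & Hi & Hx); [|tauto].
    exists i; split; auto. apply in_flat_map. exists (Some i); split; simpl; auto.
Qed.

Lemma compact_union {X} (d : X -> X -> R) (A B : X -> Prop) :
  compact d A -> compact d B -> compact d (fun x => A x \/ B x).
Proof.
  intros HA HB I U HU Hc.
  destruct (HA I U HU) as (lA & HlA); [intros; apply Hc; auto|].
  destruct (HB I U HU) as (lB & HlB); [intros; apply Hc; auto|].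
  exists (lA ++ lB). intros x [Hx|Hx].
  - destruct (HlA x Hx) as (i & Hi & H); exists i; split; auto; apply in_or_app; auto.
  - destruct (HlB x Hx) as (i & Hi & H); exists i; split; auto; apply in_or_app; auto.
Qed.

Lemma compact_list_union {X} (d : X -> X -> R) {J} (l : list J) (F : J -> X -> Prop) :
  (forall j, In j l -> compact d (F j)) -> compact d (fun z => exists j, In j l /\ F j z).
Proof.
  induction l as [|a l IH]; intros HF.
  - intros I U _ _. exists nil. intros x (j & [] & _).
  - apply compact_ext with (A := fun z => F a z \/ exists j, In j l /\ F j z).
    + intros z; split.
      * intros [H|(j & Hj & H)]; [exists a|exists j]; simpl; auto.
      * intros (j & [<-|Hj] & H); auto. right; exists j; auto.
    + apply compact_union; auto. apply HF; simpl; auto. apply IH; intros; apply HF; simpl; auto.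
Qed.

Lemma dir_list {T} (le : T -> T -> Prop) (Htr : forall a b c, le a b -> le b c -> le a c)
  (D : T -> Prop) (HD : directed le D) (a0 : T) (Ha0 : D a0) (l : list T) :
  (forall a, In a l -> D a) -> exists c, D c /\ le a0 c /\ forall a, In a l -> le a c.
Proof.
  destruct HD as [_ HD].
  induction l as [|b l IH]; intros Hl.
  - destruct (HD a0 a0 Ha0 Ha0) as (c & Hc & H & _). exists c; repeat split; auto.
    intros a [].
  - destruct IH as (c & Hc & H0 & H); [intros; apply Hl; simpl; auto|].
    destruct (HD c b Hc (Hl b (or_introl eq_refl))) as (c' & Hc' & H1 & H2).
    exists c'; repeat split; eauto.
    intros a [<-|Ha]; eauto.
Qed.

Lemma KX_le_trans {X} {d : X -> X -> R} (a b c : KX d) : KX_le a b -> KX_le b c -> KX_le a c.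
Proof. unfold KX_le; auto. Qed.

Lemma KX_le_refl {X} {d : X -> X -> R} (a : KX d) : KX_le a a.
Proof. unfold KX_le; auto. Qed.

Lemma dir_open {X} {d : X -> X -> R} (Hd : is_metric d) (D : KX d -> Prop)
  (HD : directed (@KX_le X d) D) (U : X -> Prop) (HU : open d U)
  (Hin : forall x, (forall a, D a -> proj1_sig a x) -> U x) :
  exists a, D a /\ forall x, proj1_sig a x -> U x.
Proof.
  destruct HD as [[a0 Ha0] HD'].
  pose proof (proj2 (proj2_sig a0)) as Hc0.
  destruct (Hc0 (option {a : KX d | D a})
     (fun o z => match o with Some a => ~ proj1_sig (proj1_sig a) z | None => U z end)) as (l & Hl).
  - intros [[a Ha]|]; [|exact HU]. simpl.
    apply (compact_closed Hd). exact (proj2 (proj2_sig a)).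
  - intros x Hx. destruct (classic (U x)) as [Ux|Ux].
    + exists None; auto.
    + assert (exists a, D a /\ ~ proj1_sig a x) as (a & Ha & Hax).
      { apply NNPP; intro N. apply Ux, Hin. intros a Ha. apply NNPP; intro N'. apply N; eauto. }
      exists (Some (exist _ a Ha)); auto.
  - destruct (dir_list (@KX_le X d) (@KX_le_trans X d) D (conj (ex_intro _ a0 Ha0) HD') a0 Ha0
       (flat_map (fun o => match o with Some a => proj1_sig a :: nil | None => nil end) l))
      as (c & Hc & Hc0' & Hcl).
    + intros a Ha. apply in_flat_map in Ha as ([[b Hb]|] & _ & Hab); simpl in Hab; [|tauto].
      destruct Hab as [<-|[]]; auto.
    + exists c; split; auto. intros x Hx.
      destruct (Hl x (Hc0' x Hx)) as ([[b Hb]|] & Hi & Hbx); auto.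
      exfalso; apply Hbx. apply (Hcl b); auto. apply in_flat_map. exists (Some (exist _ b Hb)); simpl; auto.
Qed.

Definition closed_ball {X} (d : X -> X -> R) x r := fun z => d x z <= r.

Lemma dir_inter {X} {d : X -> X -> R} (Hd : is_metric d) (D : KX d -> Prop)
  (HD : directed (@KX_le X d) D) :
  (exists x, forall a, D a -> proj1_sig a x) /\ compact d (fun x => forall a, D a -> proj1_sig a x).
Proof.
  split.
  - apply NNPP; intro N.
    destruct (dir_open Hd D HD (fun _ => False)) as (a & _ & Ha).
    + intros x [].
    + intros x Hx; apply N; eauto.
    + destruct (proj1 (proj2_sig a)) as (x & Hx). eauto.
  - destruct HD as [[a0 Ha0] _].
    apply closed_sub_compact with (K := proj1_sig a0); auto.
    + intros y Hy. assert (exists a, D a /\ ~ proj1_sig a y) as (a & Ha & Hay).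
      { apply NNPP; intro N. apply Hy. intros a Ha. apply NNPP; intro N'. apply N; eauto. }
      destruct (compact_closed Hd _ (proj2 (proj2_sig a)) y Hay) as (r & Hr & H).
      exists r; split; auto. intros z Hz Hz'. apply (H z Hz), Hz', Ha.
    + exact (proj2 (proj2_sig a0)).
Qed.

Definition KX_inter {X} {d : X -> X -> R} (Hd : is_metric d) (D : KX d -> Prop)
  (HD : directed (@KX_le X d) D) : KX d :=
  exist _ (fun x => forall a, D a -> proj1_sig a x) (dir_inter Hd D HD).

Lemma KX_inter_sup {X} {d : X -> X -> R} (Hd : is_metric d) (D : KX d -> Prop)
  (HD : directed (@KX_le X d) D) : is_sup (@KX_le X d) D (KX_inter Hd D HD).
Proof.
  split.
  - intros a Ha x Hx. apply Hx, Ha.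
  - intros u Hu x Hx a Ha. apply (Hu a Ha x Hx).
Qed.

Lemma KX_dcpo {X} {d : X -> X -> R} (Hd : is_metric d) : directed_complete (KX_le (d:=d)).
Proof. intros D HD. exists (KX_inter Hd D HD). apply KX_inter_sup. Qed.

Lemma sup_contains_inter {X} {d : X -> X -> R} (Hd : is_metric d) (D : KX d -> Prop)
  (HD : directed (@KX_le X d) D) s : is_sup (@KX_le X d) D s ->
  forall x, (forall a, D a -> proj1_sig a x) -> proj1_sig s x.
Proof.
  intros [_ Hs] x Hx. apply (Hs (KX_inter Hd D HD) (proj1 (KX_inter_sup Hd D HD)) x Hx).
Qed.

Lemma wb_of_int {X} {d : X -> X -> R} (Hd : is_metric d) (K L : KX d) :
  (forall x, proj1_sig K x -> interior d (proj1_sig L) x) -> way_below (@KX_le X d) L K.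
Proof.
  intros H D s HD Hs Hle.
  destruct (dir_open Hd D HD (interior d (proj1_sig L)) (interior_open d _)) as (a & Ha & Hai).
  - intros x Hx. apply H, Hle. apply (sup_contains_inter Hd D HD s Hs x Hx).
  - exists a; split; auto. intros x Hx. apply interior_sub with d, Hai, Hx.
Qed.

Lemma closed_ball_closed {X} {d : X -> X -> R} (Hd : is_metric d) x r :
  closed d (closed_ball d x r).
Proof.
  destruct (d_facts Hd) as (P & Z & E & Sy & T).
  intros y Hy. unfold closed_ball in *. exists (d x y - r). split; [lra|].
  intros z Hz Hz'. pose proof (T x z y). rewrite (Sy z y) in H. lra.
Qed.

Lemma lc_nbhd {X} {d : X -> X -> R} (Hd : is_metric d) (HLC : locally_compact d)
  (K : X -> Prop) (HK : compact d K) (U : X -> Prop) (HU : open d U)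
  (HKU : forall x, K x -> U x) :
  exists L, compact d L /\ (forall x, K x -> interior d L x) /\ (forall x, L x -> U x).
Proof.
  destruct (d_facts Hd) as (P & Z & E & Sy & T).
  set (I := {p : X * R | 0 < snd p /\ compact d (closed_ball d (fst p) (snd p)) /\
                         forall z, closed_ball d (fst p) (snd p) z -> U z}).
  destruct (HK I (fun p z => d (fst (proj1_sig p)) z < snd (proj1_sig p))) as (l & Hl).
  - intros p; apply ball_open; auto.
  - intros x Kx. destruct (HLC x) as (C & HC & V & HV & Vx & VC).
    destruct (HV x Vx) as (r1 & Hr1 & H1). destruct (HU x (HKU x Kx)) as (r2 & Hr2 & H2).
    set (e := Rmin r1 r2 / 2).
    assert (He : 0 < e) by (unfold e; pose proof (Rmin_pos r1 r2 Hr1 Hr2); lra).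
    assert (He1 : e < r1) by (unfold e; pose proof (Rmin_l r1 r2); pose proof (Rmin_pos r1 r2 Hr1 Hr2); lra).
    assert (He2 : e < r2) by (unfold e; pose proof (Rmin_r r1 r2); pose proof (Rmin_pos r1 r2 Hr1 Hr2); lra).
    assert (Hp : 0 < snd (x, e) /\ compact d (closed_ball d (fst (x, e)) (snd (x, e))) /\
                 forall z, closed_ball d (fst (x, e)) (snd (x, e)) z -> U z).
    { simpl. split; [auto|split].
      - apply closed_sub_compact with (K := C); auto.
        + apply closed_ball_closed; auto.
        + intros z Hz. apply VC, H1. unfold closed_ball in Hz. lra.
      - intros z Hz. apply H2. unfold closed_ball in Hz. lra. }
    exists (exist _ (x, e) Hp). simpl. rewrite Z. auto.
  - exists (fun z => exists p, In p l /\ closed_ball d (fst (proj1_sig p)) (snd (proj1_sig p)) z).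
    split; [|split].
    + apply compact_list_union. intros p _. exact (proj1 (proj2 (proj2_sig p))).
    + intros x Kx. exists (fun z => exists p, In p l /\ d (fst (proj1_sig p)) z < snd (proj1_sig p)).
      split; [|split].
      * intros z (p & Hp & Hz). destruct (ball_open Hd (fst (proj1_sig p)) (snd (proj1_sig p)) z Hz)
          as (r & Hr & H). exists r; split; auto. intros y Hy; exists p; split; auto.
      * apply Hl; auto.
      * intros z (p & Hp & Hz). exists p; split; auto. unfold closed_ball; cbv beta; apply Rlt_le; exact Hz.
    + intros z (p & Hp & Hz). exact (proj2 (proj2 (proj2_sig p)) z Hz).
Qed.

Definition nbhdK {X} {d : X -> X -> R} (K : KX d) : KX d -> Prop :=
  fun M => forall x, proj1_sig K x -> interior d (proj1_sig M) x.

Lemma mkKX_ex {X} {d : X -> X -> R} (L : X -> Prop) (K : KX d) :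
  compact d L -> (forall x, proj1_sig K x -> L x) -> (exists x, L x) /\ compact d L.
Proof.
  intros HL HKL. split; auto. destruct (proj1 (proj2_sig K)) as (x & Hx). eauto.
Qed.

Lemma open_and {X} (d : X -> X -> R) (U V : X -> Prop) :
  open d U -> open d V -> open d (fun x => U x /\ V x).
Proof.
  intros HU HV x [Ux Vx]. destruct (HU x Ux) as (r1 & Hr1 & H1). destruct (HV x Vx) as (r2 & Hr2 & H2).
  exists (Rmin r1 r2); split; [apply Rmin_pos; auto|].
  intros y Hy. pose proof (Rmin_l r1 r2); pose proof (Rmin_r r1 r2). split; [apply H1|apply H2]; lra.
Qed.

Lemma neq_open {X} {d : X -> X -> R} (Hd : is_metric d) y : open d (fun z => 0 < d y z).
Proof.
  destruct (d_facts Hd) as (P & Z & E & Sy & T).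
  intros z Hz. exists (d y z); split; auto. intros w Hw. pose proof (T y w z). rewrite (Sy w z) in H. lra.
Qed.

Lemma nbhd_family {X} {d : X -> X -> R} (Hd : is_metric d) (HLC : locally_compact d) (K : KX d) :
  directed (@KX_le X d) (nbhdK K) /\ is_sup (@KX_le X d) (nbhdK K) K.
Proof.
  destruct (d_facts Hd) as (P & Z & E & Sy & T).
  pose proof (proj2 (proj2_sig K)) as HK.
  split; [split|split].
  - destruct (lc_nbhd Hd HLC _ HK (fun _ => True)) as (L & HL & HKL & _); auto.
    + intros x _; exists 1; split; auto; lra.
    + assert (HL' := mkKX_ex L K HL (fun x Hx => interior_sub d L x (HKL x Hx))).
      exists (exist _ L HL'). exact HKL.
  - intros a b Ha Hb.
    destruct (lc_nbhd Hd HLC _ HK (fun x => interior d (proj1_sig a) x /\ interior d (proj1_sig b) x))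
      as (L & HL & HKL & HLU); auto.
    + apply open_and; apply interior_open.
    + assert (HL' := mkKX_ex L K HL (fun x Hx => interior_sub d L x (HKL x Hx))).
      exists (exist _ L HL'). split; [exact HKL|split]; intros z Hz; simpl in Hz;
        apply HLU in Hz as [Hz1 Hz2]; eapply interior_sub; eauto.
  - intros a Ha x Hx. apply (interior_sub d), Ha, Hx.
  - intros u Hu y Hy. apply NNPP; intro Ny.
    destruct (lc_nbhd Hd HLC _ HK (fun z => 0 < d y z)) as (L & HL & HKL & HLU); auto.
    + apply neq_open; auto.
    + intros z Hz. destruct (P y z) as [H|H]; auto. symmetry in H; apply E in H; subst; tauto.
    + assert (HL' := mkKX_ex L K HL (fun x Hx => interior_sub d L x (HKL x Hx))).
      specialize (Hu (exist _ L HL') HKL y Hy). apply HLU in Hu. rewrite Z in Hu. lra.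
Qed.

Lemma int_of_wb {X} {d : X -> X -> R} (Hd : is_metric d) (HLC : locally_compact d) (K L : KX d) :
  way_below (@KX_le X d) L K -> forall x, proj1_sig K x -> interior d (proj1_sig L) x.
Proof.
  intros H x Hx. destruct (nbhd_family Hd HLC K) as [HD HS].
  destruct (H (nbhdK K) K HD HS (KX_le_refl K)) as (M & HM & HLM).
  apply interior_mono with (proj1_sig M); auto.
Qed.

Lemma lc_Q {X} {d : X -> X -> R} (Hd : is_metric d) (HLC : locally_compact d) : property_Q d.
Proof.
  intros K1 K2; split.
  - exact (int_of_wb Hd HLC K2 K1).
  - exact (wb_of_int Hd K2 K1).
Qed.

Lemma lc_cs {X} {d : X -> X -> R} (Hd : is_metric d) (HLC : locally_compact d) :
  continuous_semilattice (@KX_le X d).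
Proof.
  split; [apply KX_dcpo; auto|].
  intros K.
  assert (E : (fun y => way_below (@KX_le X d) y K) = nbhdK K).
  { apply functional_extensionality; intro L. apply propositional_extensionality. split.
    - exact (int_of_wb Hd HLC K L).
    - exact (wb_of_int Hd K L). }
  rewrite E. apply nbhd_family; auto.
Qed.

Lemma lc_xi {X} {d : X -> X -> R} (Hd : is_metric d) (HLC : locally_compact d) : xi_sigma_continuous d.
Proof.
  intros U [Hup Hsc] x Hx.
  destruct (nbhd_family Hd HLC (xi d x)) as [HD HS].
  destruct (Hsc _ _ HD HS Hx) as (M & HM & HUM).
  destruct (HM x eq_refl) as (V & HV & Vx & VM).
  destruct (HV x Vx) as (r & Hr & H).
  exists r; split; auto. intros y Hy. apply (Hup M); auto.
  intros z Hz. simpl in Hz. subst z. apply VM, H, Hy.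
Qed.

Lemma inv_small (r : R) : 0 < r -> exists M : nat, / (INR M + 1) < r.
Proof.
  intros Hr. destruct (archimed_cor1 r Hr) as (N & HN & HN0).
  exists N. apply Rle_lt_trans with (/ INR N); auto.
  apply Rinv_le_contravar; [apply lt_0_INR; auto| lra].
Qed.

Lemma inv_mono (n m : nat) : (n <= m)%nat -> / (INR m + 1) <= / (INR n + 1).
Proof.
  intros H. apply Rinv_le_contravar; [pose proof (pos_INR n); lra|].
  apply le_INR in H; lra.
Qed.

Lemma seq_compact {X} {d : X -> X -> R} (Hd : is_metric d) (x : X) (f : nat -> X)
  (Hf : forall n, d x (f n) < / (INR n + 1)) (N : nat) :
  compact d (fun z => z = x \/ exists n, (N <= n)%nat /\ z = f n).
Proof.
  intros I U HU Hc.
  destruct (Hc x (or_introl eq_refl)) as (i0 & Hi0).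
  destruct (HU i0 x Hi0) as (r & Hr & H).
  destruct (inv_small r Hr) as (M & HM).
  assert (Hfin : forall M', exists l, forall n, (n < M')%nat -> (N <= n)%nat -> exists i, In i l /\ U i (f n)).
  { induction M' as [|M' IH].
    - exists nil; intros; lia.
    - destruct IH as (l & Hl). destruct (le_lt_dec N M') as [HN|HN].
      + destruct (Hc (f M') (or_intror (ex_intro _ M' (conj HN eq_refl)))) as (i & Hi).
        exists (i :: l). intros n Hn HNn. destruct (Nat.eq_dec n M') as [->|Hne].
        * exists i; simpl; auto.
        * destruct (Hl n ltac:(lia) HNn) as (j & Hj & Hjn). exists j; simpl; auto.
      + exists l. intros n Hn HNn. apply Hl; lia. }
  destruct (Hfin M) as (l & Hl).
  exists (i0 :: l). intros z [->|(n & Hn & ->)].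
  - exists i0; simpl; auto.
  - destruct (le_lt_dec M n) as [HMn|HMn].
    + exists i0; split; [simpl; auto|]. apply H.
      pose proof (Hf n). pose proof (inv_mono M n HMn). lra.
    + destruct (Hl n HMn Hn) as (j & Hj & Hjn). exists j; simpl; auto.
Qed.

Lemma cs_lc {X} {d : X -> X -> R} (Hd : is_metric d) (HCS : continuous_semilattice (@KX_le X d)) :
  locally_compact d.
Proof.
  destruct (d_facts Hd) as (P & Z & E & Sy & T).
  intro x. destruct HCS as [_ Happ]. destruct (Happ (xi d x)) as [[[L HL] _] _].
  exists (proj1_sig L). split; [exact (proj2 (proj2_sig L))|].
  apply NNPP; intro Nint.
  assert (Hseq : forall n : nat, exists y, d x y < / (INR n + 1) /\ ~ proj1_sig L y).
  { intro n. apply NNPP; intro N. apply Nint. exists (fun y => d x y < /(INR n+1)).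
    split; [apply ball_open; auto|split].
    - rewrite Z. apply Rinv_0_lt_compat. pose proof (pos_INR n); lra.
    - intros y Hy. apply NNPP; intro. apply N; eauto. }
  set (f := fun n => proj1_sig (constructive_indefinite_description _ (Hseq n))).
  assert (Hf : forall n, d x (f n) < / (INR n + 1) /\ ~ proj1_sig L (f n)).
  { intro n. unfold f. destruct (constructive_indefinite_description _ (Hseq n)); simpl; auto. }
  set (Tk := fun N : nat => exist (fun K => (exists y, K y) /\ compact d K)
               (fun z => z = x \/ exists n, (N <= n)%nat /\ z = f n)
               (conj (ex_intro _ x (or_introl eq_refl))
                     (seq_compact Hd x f (fun n => proj1 (Hf n)) N)) : KX d).
  set (D := fun M : KX d => exists N, forall z, proj1_sig M z <-> (z = x \/ exists n, (N <= n)%nat /\ z = f n)).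
  assert (HD : directed (@KX_le X d) D).
  { split.
    - exists (Tk 0%nat). exists 0%nat. intro z; simpl; tauto.
    - intros a b (N1 & H1) (N2 & H2). exists (Tk (Nat.max N1 N2)). split; [exists (Nat.max N1 N2); intro z; simpl; tauto|].
      split; intros z Hz; simpl in Hz; [apply H1|apply H2];
        (destruct Hz as [Hz|(n & Hn & Hz)]; [left; auto| right; exists n; split; auto; lia]). }
  assert (HS : is_sup (@KX_le X d) D (xi d x)).
  { split.
    - intros a (N & HN) z Hz. simpl in Hz. apply HN. left; auto.
    - intros u Hu y Hy. simpl. apply NNPP; intro Nxy.
      assert (Hpos : 0 < d x y).
      { destruct (P x y) as [H|H]; auto. symmetry in H; apply E in H; tauto. }
      destruct (inv_small _ Hpos) as (N & HN).
      assert (HT : D (Tk N)) by (exists N; intro z; simpl; tauto).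
      specialize (Hu (Tk N) HT y Hy). simpl in Hu.
      destruct Hu as [->|(n & Hn & ->)]; [apply Nxy; auto|].
      pose proof (proj1 (Hf n)). pose proof (inv_mono N n Hn). lra. }
  destruct (HL D (xi d x) HD HS (KX_le_refl _)) as (M & (N & HN) & HLM).
  apply (proj2 (Hf N)). apply HLM, HN. right; exists N; auto.
Qed.

Lemma open_union {X} (d : X -> X -> R) {J} (F : J -> X -> Prop) (P : J -> Prop) :
  (forall j, P j -> open d (F j)) -> open d (fun z => exists j, P j /\ F j z).
Proof.
  intros HF z (j & Hj & Hz). destruct (HF j Hj z Hz) as (r & Hr & H).
  exists r; split; auto. intros y Hy; exists j; auto.
Qed.

Lemma OX_le_trans {X} {d : X -> X -> R} (a b c : OX d) : OX_le a b -> OX_le b c -> OX_le a c.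
Proof. unfold OX_le; auto. Qed.

Definition Ounion {X} {d : X -> X -> R} (D : OX d -> Prop) : OX d :=
  exist _ (fun z => exists a, D a /\ proj1_sig a z)
    (open_union d (fun a z => proj1_sig a z) D (fun a _ => proj2_sig a)).

Lemma Ounion_sup {X} {d : X -> X -> R} (D : OX d -> Prop) : is_sup (@OX_le X d) D (Ounion D).
Proof.
  split.
  - intros a Ha z Hz. exists a; auto.
  - intros u Hu z (a & Ha & Hz). apply (Hu a Ha z Hz).
Qed.

Lemma lc_cc {X} {d : X -> X -> R} (Hd : is_metric d) (HLC : locally_compact d) : core_compact d.
Proof.
  destruct (d_facts Hd) as (P & Z & E & Sy & T).
  split.
  - intros D. exists (Ounion D). apply Ounion_sup.
  - intros V. split; [split|split].
    + assert (H0 : open d (fun _ : X => False)) by (intros z []).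
      exists (exist _ (fun _ => False) H0).
      intros D s [[a Ha] _] _ _. exists a; split; auto. intros z [].
    + intros W1 W2 H1 H2.
      assert (H12 : open d (fun z => proj1_sig W1 z \/ proj1_sig W2 z)).
      { apply open_ext with (A := fun z => exists b : bool, True /\ (if b then proj1_sig W1 z else proj1_sig W2 z)).
        - intros z; split; [intros ([|] & _ & Hz); auto|intros [Hz|Hz]; [exists true|exists false]; auto].
        - apply open_union. intros [|] _; apply proj2_sig. }
      exists (exist _ _ H12). split; [|split; intros z Hz; simpl; auto].
      intros D s HD Hs Hle.
      destruct (H1 D s HD Hs Hle) as (d1 & Hd1 & Hl1).
      destruct (H2 D s HD Hs Hle) as (d2 & Hd2 & Hl2).
      destruct (proj2 HD d1 d2 Hd1 Hd2) as (c & Hc & Hc1 & Hc2).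
      exists c; split; auto. intros z [Hz|Hz]; auto.
    + intros W HW.
      set (D0 := fun a : OX d => forall z, proj1_sig a z <-> proj1_sig V z).
      assert (HD0 : directed (@OX_le X d) D0).
      { split; [exists V; intro; unfold D0; tauto|].
        intros a b Ha Hb. exists V; split; [intro; tauto|]. split; intros z Hz; [apply Ha|apply Hb]; auto. }
      assert (HS0 : is_sup (@OX_le X d) D0 V).
      { split; [intros a Ha z Hz; apply Ha; auto|]. intros u Hu. apply Hu. intro; tauto. }
      destruct (HW D0 V HD0 HS0 (fun z Hz => Hz)) as (a & Ha & HWa).
      intros z Hz. apply Ha, HWa, Hz.
    + intros u Hu x Vx.
      destruct (singleton_nonempty_compact d x) as [_ Hsc].
      destruct (lc_nbhd Hd HLC (fun y => x = y) Hsc (proj1_sig V) (proj2_sig V)) as (L & HL & HxL & HLV).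
      { intros y <-; auto. }
      set (W := exist _ (interior d L) (interior_open d L) : OX d).
      assert (HW : way_below (@OX_le X d) W V).
      { intros D s HD Hs Hle.
        assert (HLD : forall z, L z -> exists a, D a /\ proj1_sig a z).
        { intros z Hz. apply (proj2 Hs (Ounion D) (proj1 (Ounion_sup D))). apply Hle, HLV, Hz. }
        destruct (HL {a : OX d | D a} (fun a z => proj1_sig (proj1_sig a) z)) as (l & Hl).
        - intros a; apply proj2_sig.
        - intros z Hz. destruct (HLD z Hz) as (a & Ha & Haz). exists (exist _ a Ha); auto.
        - destruct HD as [[a0 Ha0] HD'].
          destruct (dir_list (@OX_le X d) (@OX_le_trans X d) D (conj (ex_intro _ a0 Ha0) HD') a0 Ha0
                     (map (@proj1_sig _ _) l)) as (c & Hc & _ & Hcl).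
          + intros a Ha. apply in_map_iff in Ha as ([b Hb] & <- & _). auto.
          + exists c; split; auto. intros z Hz. simpl in Hz. apply interior_sub in Hz.
            destruct (Hl z Hz) as ([a Ha] & Hi & Haz).
            apply (Hcl a); auto. apply in_map_iff. exists (exist _ a Ha); auto. }
      apply (Hu W HW). exact (HxL x eq_refl).
Qed.

Lemma cc_lc {X} {d : X -> X -> R} (Hd : is_metric d) (HCC : core_compact d) : locally_compact d.
Proof.
  destruct (d_facts Hd) as (P & Z & E & Sy & T).
  intro x. destruct HCC as [_ Happ].
  assert (Hfull : open d (fun _ : X => True)) by (intros z _; exists 1; split; auto; lra).
  set (Full := exist _ _ Hfull : OX d).
  destruct (Happ Full) as [_ [_ HS]].
  assert (Hx : proj1_sig (Ounion (fun W => way_below (@OX_le X d) W Full)) x).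
  { apply (HS (Ounion _) (proj1 (Ounion_sup _))). exact I. }
  destruct Hx as (W & HW & Wx).
  destruct (proj2_sig W x Wx) as (r & Hr & Hball).
  set (B := closed_ball d x (r / 2)).
  exists B. split.
  - intros I U HU Hc.
    assert (HO : forall l : list I, open d (fun z => ~ B z \/ exists i, In i l /\ U i z)).
    { intros l z [Hz|(i & Hi & Hz)].
      - destruct (closed_ball_closed Hd x (r/2) z Hz) as (e & He & H).
        exists e; split; [auto|]. intros y Hy; left; auto.
      - destruct (HU i z Hz) as (e & He & H). exists e; split; [auto|]. intros y Hy; right; exists i; auto. }
    set (mk := fun l => exist _ _ (HO l) : OX d).
    set (D := fun a : OX d => exists l, forall z, proj1_sig a z <-> (~ B z \/ exists i, In i l /\ U i z)).
    assert (HD : directed (@OX_le X d) D).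
    { split; [exists (mk nil); exists nil; intro; simpl; tauto|].
      intros a b (l1 & H1) (l2 & H2). exists (mk (l1 ++ l2)). split; [exists (l1 ++ l2); intro; simpl; tauto|].
      split; intros z Hz; simpl.
      - apply H1 in Hz as [Hz|(i & Hi & Hz)]; auto. right; exists i; split; auto; apply in_or_app; auto.
      - apply H2 in Hz as [Hz|(i & Hi & Hz)]; auto. right; exists i; split; auto; apply in_or_app; auto. }
    assert (HSD : is_sup (@OX_le X d) D Full).
    { split; [intros a _ z _; exact Logic.I|].
      intros u Hu z _. destruct (classic (B z)) as [Bz|Bz].
      - destruct (Hc z Bz) as (i & Hi). apply (Hu (mk (i :: nil))); [exists (i :: nil); intro; simpl; tauto|].
        simpl. right; exists i; simpl; auto.
      - apply (Hu (mk nil)); [exists nil; intro; simpl; tauto|]. simpl; auto. }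
    destruct (HW D Full HD HSD (fun z Hz => Hz)) as (a & (l & Hl) & HWa).
    exists l. intros z Bz.
    assert (Hz : proj1_sig a z).
    { apply HWa, Hball. unfold B, closed_ball in Bz. lra. }
    apply Hl in Hz as [Hz|Hz]; tauto.
  - exists (fun z => d x z < r / 2). split; [apply ball_open; auto|split].
    + rewrite Z; lra.
    + intros y Hy. unfold B, closed_ball; lra.
Qed.

Theorem mainTheorem15 (X : Type) (d : X -> X -> R) (Hd : is_metric d) :
  (locally_compact d <->
     (continuous_semilattice (KX_le (d:=d)) /\ xi_sigma_continuous d)) /\
  ((continuous_semilattice (KX_le (d:=d)) /\ xi_sigma_continuous d) <->
     (continuous_semilattice (KX_le (d:=d)) /\ property_Q d)) /\
  ((continuous_semilattice (KX_le (d:=d)) /\ property_Q d) <->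
     continuous_semilattice (KX_le (d:=d))) /\
  (continuous_semilattice (KX_le (d:=d)) <-> core_compact d).
Proof.
  assert (cl : continuous_semilattice (KX_le (d:=d)) -> locally_compact d) by (apply cs_lc; auto).
  split; [|split; [|split]].
  - split.
    + intros H; split; [apply lc_cs|apply lc_xi]; auto.
    + intros [H _]; auto.
  - split.
    + intros [H _]; split; auto. apply lc_Q; auto.
    + intros [H _]; split; auto. apply lc_xi; auto.
  - split.
    + intros [H _]; exact H.
    + intros H; split; auto. apply lc_Q; auto.
  - split.
    + intros H; apply lc_cc; auto.
    + intros H; apply lc_cs; auto. apply cc_lc; auto.
Qed.
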